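(* Let $f:[-1,1]\to\mathbb{R}$ be continuous, let $n\geq 0$, and let $\underline{c}=(c_0,\ldots,c_n)^\top\in\mathbb{R}^{n+1}$. Define $L[\underline{c}]=(\mu_0,\ldots,\mu_n)^\top$ by \[ \mu_i=\int_{-1}^1\operatorname{sign}\!\Big(f(x)-\sum_{j=0}^n c_jU_j(x)\Big)U_i(x)\,dx,\qquad 0\leq i\leq n. \] If $M:=\tfrac{2}{\pi}(n+2)^2\max_{0\leq i\leq n}|\mu_i|<1$, then \[ \Big\|f-\sum_{j=0}^n c_jU_j\Big\|_1\leq\frac{1}{1-M}\,\|f-p_n^{L_1}\|_1, \] where $p_n^{L_1}$ is the best $L_1$ polynomial approximant of degree $\leq n$ to $f$.
   Context: $U_j$ is the Chebyshev polynomial of the second kind of degree $j$. $\operatorname{sign}(y)$ equals $1$ for $y>0$, $0$ for $y=0$, $-1$ for $y<0$. $\|g\|_1=\int_{-1}^1|g(x)|\,dx$, and $p_n^{L_1}$ is the (unique) real polynomial of degree $\leq n$ minimizing $\|f-q\|_1$. *)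

(* Defs.v *)
From HB Require Import structures.
From mathcomp Require Import all_boot all_order all_algebra.
From mathcomp Require Import all_classical all_reals all_analysis.
Set Implicit Arguments. Unset Strict Implicit. Unset Printing Implicit Defensive.
Import Order.TTheory GRing.Theory Num.Theory.
Local Open Scope ring_scope.
Local Open Scope classical_set_scope.

(* Chebyshev polynomials of the second kind:
   U_0 = 1, U_1 = 2X, U_{j+2} = 2X U_{j+1} - U_j. *)
Fixpoint chebU_pair (R : nzRingType) (j : nat) : {poly R} * {poly R} :=
  match j with
  | 0%N => (1, 2%:R *: 'X)
  | j'.+1 => let (a, b) := chebU_pair R j' in (b, 2%:R *: 'X * b - a)
  end.
Definition chebU (R : nzRingType) (j : nat) : {poly R} := (chebU_pair R j).1.

Definition int11 (R : realType) (g : R -> R) : R :=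
  Rintegral (@lebesgue_measure R) `[(-1)%R, 1%R] g.

Definition L1norm (R : realType) (g : R -> R) : R := int11 (fun x => `|g x|).

Definition chebU_sum (R : realType) (n : nat) (c : 'I_n.+1 -> R) (x : R) : R :=
  \sum_(j < n.+1) c j * (chebU R j).[x].

Definition Lmu (R : realType) (f : R -> R) (n : nat) (c : 'I_n.+1 -> R)
    (i : 'I_n.+1) : R :=
  int11 (fun x => Num.sg (f x - chebU_sum c x) * (chebU R i).[x]).

Definition best_L1_approx (R : realType) (f : R -> R) (n : nat) (p : {poly R}) :=
  (size p <= n.+1)%N /\
  forall q : {poly R}, (size q <= n.+1)%N ->
    L1norm (fun x => f x - p.[x]) <= L1norm (fun x => f x - q.[x]).

(* Main.v *)
Require Import Defs.
From HB Require Import structures.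
From mathcomp Require Import all_boot all_order all_algebra.
From mathcomp Require Import all_classical all_reals all_analysis.
From mathcomp Require Import ring lra zify.
Import Order.TTheory GRing.Theory Num.Theory numFieldNormedType.Exports.
Local Open Scope ring_scope.
Local Open Scope classical_set_scope.
Set Implicit Arguments. Unset Strict Implicit. Unset Printing Implicit Defensive.
Section Poly.
Context {R : realType}.

Lemma chebU0 : chebU R 0 = 1. Proof. by []. Qed.
Lemma chebU1 : chebU R 1 = 2%:R *: 'X. Proof. by []. Qed.
Lemma chebU_pairE j : chebU_pair R j = (chebU R j, chebU R j.+1).
Proof.
rewrite /chebU; elim: j => [//|j IH] /=.
by rewrite IH.
Qed.
Lemma chebUSS j : chebU R j.+2 = 2%:R *: 'X * chebU R j.+1 - chebU R j.
Proof. by rewrite {1}/chebU /= chebU_pairE. Qed.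

Lemma size_lead_chebU j : size (chebU R j) = j.+1 /\ lead_coef (chebU R j) = 2%:R ^+ j.
Proof.
elim/ltn_ind: j => -[|[|j]] IH.
- by rewrite chebU0 size_poly1 lead_coef1.
- rewrite chebU1 -mul_polyC size_mulX ?polyC_eq0 ?pnatr_eq0 // size_polyC pnatr_eq0 /=.
  by split => //; rewrite lead_coefMX lead_coefC expr1.
- have [s1 l1] := IH j.+1 (ltnSn _).
  have [s0 l0] := IH j (leqnSn _).
  have h2 : (2%:R : R) != 0 by rewrite pnatr_eq0.
  have sX : size (2%:R *: 'X * chebU R j.+1) = j.+3.
    by rewrite -scalerAl size_scale // mulrC size_mulX -?size_poly_eq0 ?s1.
  have lt : (size (chebU R j) < size ((2%:R *: 'X * chebU R j.+1)%R))%N by rewrite sX s0 ltnS leqnSn.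
  rewrite chebUSS size_addl ?size_opp // lead_coefDl ?size_opp //.
  split => //; rewrite -scalerAl lead_coefZ (mulrC 'X) lead_coefMX l1 -exprS.
  done.
Qed.

Lemma size_chebU j : size (chebU R j) = j.+1. Proof. exact: (size_lead_chebU j).1. Qed.

Lemma chebU_span n (q : {poly R}) : (size q <= n.+1)%N ->
  exists d : 'I_n.+1 -> R, q = \sum_(j < n.+1) d j *: chebU R j.
Proof.
elim: n q => [|n IH] q hq.
  exists (fun _ => q`_0); rewrite big_ord1 chebU0 alg_polyC.
  exact: size1_polyC.
have hl := (size_lead_chebU n.+1).2.
set a := q`_n.+1 / 2%:R ^+ n.+1.
have : (size (q - a *: chebU R n.+1)%R <= n.+1)%N.
  apply/leq_sizeP => i; rewrite leq_eqVlt => /orP[/eqP <-|hi].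
    rewrite coefB coefZ; have -> : (chebU R n.+1)`_n.+1 = lead_coef (chebU R n.+1) by rewrite lead_coefE size_chebU.
    rewrite hl /a divfK ?subrr //.
  rewrite coefB coefZ.
  move/leq_sizeP: hq => -> //; move: (size_chebU n.+1) => /eqP; rewrite eqn_leq => /andP[+ _].
  by move/leq_sizeP => -> //; rewrite mulr0 subrr.
move=> /IH [d hd]; exists (fun j : 'I_n.+2 => if (j < n.+1)%N then d (inord j) else a).
rewrite big_ord_recr /=.
rewrite ltnn -[q](subrK (a *: chebU R n.+1)) hd; congr (_ + _).
apply: eq_bigr => i _; rewrite /= ltn_ord.
by congr (_ *: _); congr d; apply: val_inj; rewrite /= inordK.
Qed.
End Poly.
Section Trig.
Context {R : realType}.
Notation mu := (@lebesgue_measure R).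

Lemma is_derive_mulk (k t : R) : is_derive t 1 (fun t => k * t) k.
Proof.
have -> : (fun t => k * t) = k \*: (@id R) by apply/funext.
have h := (@is_deriveZ R R R id k t 1 1 (is_derive_id _ _)).
exact: (is_derive_eq h (mulr1 k)).
Qed.

Lemma is_derive_sink (k t : R) : is_derive t 1 (fun t => sin (k * t)) (cos (k * t) * k).
Proof.
exact: (@is_derive1_comp R sin (fun t => k * t) t (cos (k * t)) k _ (is_derive_mulk k t)).
Qed.

Lemma is_derive_cosk (k t : R) : is_derive t 1 (fun t => cos (k * t)) (- sin (k * t) * k).
Proof.
exact: (@is_derive1_comp R cos (fun t => k * t) t (- sin (k * t)) k _ (is_derive_mulk k t)).
Qed.

Lemma continuous_sink (k : R) : continuous (fun t => sin (k * t)).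
Proof.
move=> x; apply: differentiable_continuous; apply/derivable1_diffP.
exact: (@ex_derive _ _ _ x 1 _ _ (is_derive_sink k x)).
Qed.

Lemma continuous_cosk (k : R) : continuous (fun t => cos (k * t)).
Proof.
move=> x; apply: differentiable_continuous; apply/derivable1_diffP.
exact: (@ex_derive _ _ _ x 1 _ _ (is_derive_cosk k x)).
Qed.

Lemma sin_natpi (m : nat) : sin (m%:R * pi) = 0 :> R.
Proof.
have := alternatingn (@sinDpi R) m 0.
by rewrite add0r sin0 mulr0 mulr_natl.
Qed.

Lemma is_derive_sinkV (k t : R) : k != 0 ->
  is_derive t 1 (fun t => sin (k * t) / k) (cos (k * t)).
Proof.
move=> k0.
have -> : (fun t => sin (k * t) / k) = k^-1 \*: (fun t => sin (k * t)).
  by apply/funext => x /=; rewrite /GRing.scale /= mulrC.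
have h := (@is_deriveZ R R R _ k^-1 t 1 _ (is_derive_sink k t)).
apply: (is_derive_eq h).
by rewrite /GRing.scale /= mulrCA mulVf // mulr1.
Qed.

Lemma continuous_sinkV (k : R) : k != 0 -> continuous (fun t => sin (k * t) / k).
Proof.
move=> k0 x; apply: differentiable_continuous; apply/derivable1_diffP.
exact: (@ex_derive _ _ _ x 1 _ _ (is_derive_sinkV x k0)).
Qed.

Lemma int_cos_nat (k : nat) :
  \int[mu]_(t in `[0, pi]) cos (k%:R * t) = if k == 0%N then pi else 0.
Proof.
case: k => [|k] /=.
  rewrite /Rintegral (@continuous_FTC2 _ _ id) ?pi_gt0//=.
  - by rewrite subr0.
  - by apply/continuous_subspaceT => x; apply: continuous_cosk.
  - split => //.
    + by apply: cvg_at_right_filter; exact: cvg_id.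
    + by apply: cvg_at_left_filter; exact: cvg_id.
  - by move=> x _; rewrite mul0r cos0 derive1E derive_id.
have k0 : (k.+1%:R : R) != 0 by rewrite pnatr_eq0.
rewrite /Rintegral (@continuous_FTC2 _ _ (fun t => sin (k.+1%:R * t) / k.+1%:R)) ?pi_gt0//=.
- by rewrite sin_natpi mulr0 sin0 mul0r subrr.
- by apply/continuous_subspaceT => x; apply: continuous_cosk.
- split.
  + by move=> x _; exact: (@ex_derive _ _ _ x 1 _ _ (is_derive_sinkV x k0)).
  + by apply: cvg_at_right_filter; exact: continuous_sinkV.
  + by apply: cvg_at_left_filter; exact: continuous_sinkV.
- move=> x _; rewrite derive1E; exact: (@derive_val _ _ _ _ _ _ _ (is_derive_sinkV x k0)).
Qed.
Lemma cint (a b : R) (g : R -> R) : {within `[a, b], continuous g} ->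
  mu.-integrable `[a, b] (EFin \o g).
Proof. by move=> h; apply: continuous_compact_integrable => //; exact: segment_compact. Qed.

Lemma cintT (a b : R) (g : R -> R) : continuous g -> mu.-integrable `[a, b] (EFin \o g).
Proof. by move=> h; apply: cint; apply/continuous_subspaceT. Qed.

Lemma cos_distn (a b : nat) (t : R) :
  cos ((a%:R - b%:R) * t) = cos ((`|a - b|%N)%:R * t).
Proof.
case: (leqP a b) => ab.
  by rewrite distnEr // natrB // -cosN -mulNr opprB.
by rewrite distnEl ?natrB // ltnW.
Qed.

Lemma int_sin_sin (a b : nat) :
  \int[mu]_(t in `[0, pi]) (sin (a.+1%:R * t) * sin (b.+1%:R * t)) =
  if a == b then pi / 2 else 0.
Proof.
rewrite (@eq_Rintegral _ _ _ mu _ (fun t => 2^-1 * (cos ((`|a - b|%N)%:R * t) - cos ((a + b).+2%:R * t)))); last first.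
  move=> t _; rewrite -cos_distn.
  have -> : ((a%:R - b%:R) * t = a.+1%:R * t - b.+1%:R * t :> R).
    by rewrite -mulrBl (mulrSr 1 a) (mulrSr 1 b) opprD addrACA subrr addr0.
  have -> : ((a + b).+2%:R * t = a.+1%:R * t + b.+1%:R * t :> R).
    by rewrite -mulrDl -natrD addSn addnS.
  by rewrite cosB cosD; field.
set d := (`|a - b|%N).
transitivity (2^-1 * (\int[mu]_(t in `[0, pi]) cos (d%:R * t) - \int[mu]_(t in `[0, pi]) cos ((a + b).+2%:R * t))).
  have i1 : mu.-integrable `[0, pi] (EFin \o (fun t => cos (d%:R * t))) by apply: cintT; apply: continuous_cosk.
  have i2 : mu.-integrable `[0, pi] (EFin \o (fun t => cos ((a + b).+2%:R * t))) by apply: cintT; apply: continuous_cosk.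
  rewrite -(RintegralB _ i1 i2) //.
  apply: RintegralZl => //.
  exact: (integrableB _ i1 i2).
rewrite !int_cos_nat /=.
rewrite /d distn_eq0; case: eqP => _; last by rewrite subrr mulr0.
by rewrite subr0 mulrC.
Qed.

End Trig.
Section Subst.
Context {R : realType}.
Notation mu := (@lebesgue_measure R).

Lemma sin_chebU j (t : R) : (chebU R j).[cos t] * sin t = sin (j.+1%:R * t).
Proof.
elim/ltn_ind: j => -[|[|j]] IH.
- by rewrite chebU0 hornerC mul1r mul1r.
- by rewrite chebU1 hornerZ hornerX !mulr_natl sin_mulr2n mulrnAl.
- rewrite (@chebUSS R j) hornerD hornerN -scalerAl hornerZ hornerM hornerX.
  rewrite mulrBl -!mulrA (mulrC _ (sin t)) mulrA (mulrC (sin t)) IH // IH //.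
  have -> : (j.+3%:R * t = j.+2%:R * t + t :> R) by rewrite (mulrSr 1 j.+2) mulrDl mul1r.
  have -> : (j.+1%:R * t = j.+2%:R * t - t :> R) by rewrite (mulrSr 1 j.+1) mulrDl mul1r addrK.
  rewrite !sinD cosN sinN; ring.
Qed.

Lemma dcos : (@cos R)^`() = (fun x => - sin x).
Proof. by apply/funext => x; rewrite derive1E derive_val. Qed.

Lemma subst_cos (G : R -> R) : continuous G ->
  \int[mu]_(x in `[-1, 1]) G x = \int[mu]_(t in `[0, pi]) (G (cos t) * sin t).
Proof.
move=> cG.
have h := @integration_by_substitution_decreasing R cos G 0 pi.
rewrite cospi cos0 in h.
rewrite /Rintegral h.
- congr fine; apply: eq_integral => x _; by rewrite /= dcos opprK.
- exact: pi_ge0.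
- by move=> x y hx hy xy; rewrite ltr_cos.
- by rewrite dcos => x _; apply: continuousN; exact: continuous_sin.
- rewrite dcos; apply/cvg_ex; exists (- sin 0).
  by apply: cvg_at_right_filter; apply: continuousN; exact: continuous_sin.
- rewrite dcos; apply/cvg_ex; exists (- sin pi).
  by apply: cvg_at_left_filter; apply: continuousN; exact: continuous_sin.
- split.
  + by move=> x _; exact: derivable_cos.
  + by apply: cvg_at_right_filter; exact: continuous_cos.
  + by apply: cvg_at_left_filter; exact: continuous_cos.
- exact/continuous_subspaceT.
Qed.

Lemma Rintegral_sum (a b : R) m (F : 'I_m -> R -> R) :
  (forall i, mu.-integrable `[a, b] (EFin \o F i)) ->
  mu.-integrable `[a, b] (EFin \o (fun x => \sum_(i < m) F i x)) /\
  \int[mu]_(x in `[a, b]) (\sum_(i < m) F i x) = \sum_(i < m) \int[mu]_(x in `[a, b]) F i x.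
Proof.
elim: m F => [|m IH] F hF.
  have -> : (fun x => \sum_(i < 0) F i x) = (fun _ => 0) by apply/funext => x; rewrite big_ord0.
  rewrite big_ord0.
  split; first exact: integrable0.
  by rewrite Rintegral_cst // mul0r.
have [i1 e1] := IH (fun i => F (widen_ord (leqnSn m) i)) (fun i => hF _).
have e : (fun x => \sum_(i < m.+1) F i x) =
    (fun x => \sum_(i < m) F (widen_ord (leqnSn m) i) x + F ord_max x).
  by apply/funext => x; rewrite big_ord_recr.
rewrite e big_ord_recr /= -e1; split.
  have -> : EFin \o (fun x => \sum_(i < m) F (widen_ord (leqnSn m) i) x + F ord_max x) =
    (EFin \o (fun x => \sum_(i < m) F (widen_ord (leqnSn m) i) x)) \+ (EFin \o F ord_max).
    by apply/funext => x.
  exact: integrableD.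
exact: (RintegralD _ i1 (hF ord_max)).
Qed.

Lemma contM (f g : R -> R) : continuous f -> continuous g -> continuous (fun x => f x * g x).
Proof. by move=> hf hg x; exact: (@continuousM _ _ f g x (hf x) (hg x)). Qed.

Lemma contN (f : R -> R) : continuous f -> continuous (fun x => `|f x|).
Proof.
move=> hf x; apply: (continuous_comp (f := f) (g := Num.norm)); first exact: hf.
exact: norm_continuous.
Qed.

Lemma cont_hornercos (q : {poly R}) : continuous (fun t => q.[cos t]).
Proof.
move=> x; apply: (continuous_comp (f := cos) (g := horner q)).
  exact: continuous_cos.
exact: continuous_horner.
Qed.

Lemma coef_bound n (d : 'I_n.+1 -> R) (j : 'I_n.+1) :
  `|d j| <= 2 / pi * \int[mu]_(x in `[-1, 1]) `|(\sum_(i < n.+1) d i *: chebU R i).[x]|.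
Proof.
set q := \sum_(i < n.+1) d i *: chebU R i.
have hq t : q.[cos t] * sin t = \sum_(i < n.+1) d i * sin (i.+1%:R * t).
  rewrite /q horner_sum mulr_suml; apply: eq_bigr => i _.
  by rewrite hornerZ -mulrA sin_chebU.
set psi := \int[mu]_(t in `[0, pi]) (q.[cos t] * sin t * sin (j.+1%:R * t)).
have psiE : psi = d j * (pi / 2).
  rewrite /psi (@eq_Rintegral _ _ _ mu _ (fun t => \sum_(i < n.+1) d i * (sin (i.+1%:R * t) * sin (j.+1%:R * t)))); last first.
    by move=> t _; rewrite hq mulr_suml; apply: eq_bigr => i _; rewrite mulrA.
  rewrite (proj2 (@Rintegral_sum 0 pi n.+1 (fun i t => d i * (sin (i.+1%:R * t) * sin (j.+1%:R * t))) _)); last first.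
    move=> i; apply: cintT; apply: contM; first exact: cst_continuous.
    by apply: contM; apply: continuous_sink.
  rewrite (bigD1 j) //= big1 ?addr0.
    rewrite RintegralZl //; last by apply: cintT; apply: contM; apply: continuous_sink.
    by rewrite int_sin_sin eqxx.
  move=> i ij; rewrite RintegralZl //; last by apply: cintT; apply: contM; apply: continuous_sink.
  by rewrite int_sin_sin ifN ?mulr0.
have hb : `|psi| <= \int[mu]_(x in `[-1, 1]) `|q.[x]|.
  rewrite (subst_cos (G := fun x => `|q.[x]|)); last first.
    move=> x; apply: (continuous_comp (f := horner q) (g := Num.norm)).
      exact: continuous_horner.
    exact: norm_continuous.
  have c1 : continuous (fun t => q.[cos t] * sin t * sin (j.+1%:R * t)).
    apply: contM; last exact: continuous_sink.
    apply: contM; [exact: cont_hornercos|exact: continuous_sin].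
  apply: le_trans (le_normr_Rintegral _ (cintT _ _ c1)) _ => //.
  apply: le_Rintegral => //.
    by apply: cintT; apply: contN.
    apply: cintT; apply: contM; last exact: continuous_sin.
    by apply: contN; exact: cont_hornercos.
  move=> t; rewrite /= in_itv /= => /andP[t0 tpi].
  rewrite !normrM (ger0_norm (sin_ge0_pi _)) ?t0 ?tpi //.
  rewrite -[X in _ <= X]mulr1 ler_wpM2l ?sin_max //.
  by rewrite mulr_ge0 // sin_ge0_pi // t0 tpi.
have pi0 : 0 < pi :> R := pi_gt0 R.
have -> : d j = psi * (2 / pi).
  have h1 : pi / 2 * (2 / pi) = 1 :> R.
    rewrite mulrC mulrA divfK ?gt_eqF // divff //.
  by rewrite psiE -mulrA h1 mulr1.
have h2 : 0 <= 2 / pi :> R by rewrite divr_ge0 // ltW.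
rewrite (normrM psi) (ger0_norm h2) mulrC.
by rewrite ler_wpM2l.
Qed.
End Subst.
Section Main.
Context {R : realType}.
Notation mu := (@lebesgue_measure R).

Lemma sg_if (y : R) : Num.sg y = if 0 < y then 1 else if y < 0 then -1 else 0.
Proof. by case: sgrP. Qed.

Lemma measurable_sg (e : R -> R) : measurable_fun `[(-1 : R), 1] e ->
  measurable_fun `[(-1 : R), 1] (fun x => Num.sg (e x)).
Proof.
move=> me.
have -> : (fun x => Num.sg (e x)) =
  (fun x => if 0 < e x then 1 else if e x < 0 then -1 else 0).
  by apply/funext => x; rewrite sg_if.
have mD : measurable `[(-1 : R), 1] by [].
have mf : measurable_fun `[(-1 : R), 1] (fun x => 0 < e x).
  by apply: measurable_realfun.measurable_fun_ltr => //; exact: measurable_cst.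
apply: (measurable_fun_if mD mf); first exact: measurable_cst.
have mD' : measurable (`[(-1 : R), 1] `&` (fun x => 0 < e x) @^-1` [set false]).
  exact: mf.
apply: (measurable_fun_if mD').
- apply: measurable_realfun.measurable_fun_ltr; last exact: measurable_cst.
  exact: measurable_funS me.
- exact: measurable_cst.
- exact: measurable_cst.
Qed.


Lemma integ_sgM (e h : R -> R) : {within `[(-1 : R), 1], continuous e} ->
  {within `[(-1 : R), 1], continuous h} ->
  mu.-integrable `[(-1 : R), 1] (EFin \o (fun x => Num.sg (e x) * h x)).
Proof.
move=> ce ch.
have me : measurable_fun `[(-1 : R), 1] e.
  exact: measurable_realfun.subspace_continuous_measurable_fun.
have ms := measurable_sg me.
have bs : [bounded Num.sg (e x) | x in `[(-1 : R), 1]].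
  exists 1; split => // M M1 x _ /=.
  rewrite normr_sg; apply: le_trans (ltW M1); by case: (_ != 0).
have := @integrableMr _ _ R mu `[(-1 : R), 1] (measurable_itv _) (fun x => Num.sg (e x)) (EFin \o h) ms bs (cint ch).
by [].
Qed.
End Main.
Lemma withinB {R : realType} (D : set R) (f g : R -> R) : {within D, continuous f} ->
  {within D, continuous g} -> {within D, continuous (fun x => f x - g x)}.
Proof. move=> hf hg x; apply: continuousB; [exact: hf | exact: hg]. Qed.

Lemma withinN {R : realType} (D : set R) (f : R -> R) : {within D, continuous f} ->
  {within D, continuous (fun x => `|f x|)}.
Proof.
move=> hf x; exact: (continuous_comp (hf x) (@norm_continuous _ R^o (f x))).
Qed.

Lemma withinD {R : realType} (D : set R) (f g : R -> R) : {within D, continuous f} ->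
  {within D, continuous g} -> {within D, continuous (fun x => f x + g x)}.
Proof. move=> hf hg x; apply: continuousD; [exact: hf | exact: hg]. Qed.

Unset Implicit Arguments. Set Strict Implicit.

Theorem theorem5p1 (R : realType) (f : R -> R)
  (hf : {within `[(-1)%R, 1%R], continuous f})
  (n : nat) (c : 'I_n.+1 -> R) (p : {poly R})
  (hp : best_L1_approx f n p) :
  let M := 2 / pi * (n.+2)%:R ^+ 2 * \big[Num.max/0]_(i < n.+1) `|Lmu f c i| in
  M < 1 ->
  L1norm (fun x => f x - chebU_sum c x)
    <= (1 - M)^-1 * L1norm (fun x => f x - p.[x]).
Proof.
move=> M hM.
set m := \big[Num.max/0]_(i < n.+1) `|Lmu f c i|.
set sp := \sum_(j < n.+1) c j *: chebU R j.
have hs x : chebU_sum c x = sp.[x].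
  by rewrite /chebU_sum /sp horner_sum; apply: eq_bigr => j _; rewrite hornerZ.
have sps : (size sp <= n.+1)%N.
  rewrite /sp; apply: (big_ind (fun q : {poly R} => (size q <= n.+1)%N)) => //.
  - by rewrite size_poly0.
  - by move=> x y hx hy; apply: leq_trans (size_polyD _ _) _; rewrite geq_max hx hy.
  - by move=> j _; apply: leq_trans (size_scale_leq _ _) _; rewrite size_chebU.
set qq := p - sp.
have qqs : (size qq <= n.+1)%N.
  apply: leq_trans (size_polyD _ _) _; rewrite geq_max size_polyN sps andbT.
  exact: hp.1.
have [d hd] := chebU_span qqs.
have cpol (r : {poly R}) : {within `[(-1 : R), 1], continuous (fun x => r.[x])}.
  by apply/continuous_subspaceT => x; exact: continuous_horner.
have cs : {within `[(-1 : R), 1], continuous (chebU_sum c)}.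
  have -> : chebU_sum c = (fun x => sp.[x]) by apply/funext => x; rewrite hs.
  exact: cpol.
set e := fun x => f x - chebU_sum c x.
set g := fun x => f x - p.[x].
have ce : {within `[(-1 : R), 1], continuous e} by exact: withinB.
have cg : {within `[(-1 : R), 1], continuous g} by exact: withinB.
set E := L1norm e.
set G := L1norm g.
set Q := int11 (fun x => `|qq.[x]|).
have E0 : 0 <= E by apply: Rintegral_ge0 => x _.
have G0 : 0 <= G by apply: Rintegral_ge0 => x _.
have m0 : 0 <= m.
  rewrite /m; apply: (le_trans (normr_ge0 (Lmu f c ord0))).
  exact: (le_bigmax 0 (fun i => `|Lmu f c i|) ord0).
have pi0 : 0 < pi :> R := pi_gt0 R.
have hsg (y z : R) : Num.sg y * z <= `|z|.
  apply: le_trans (ler_norm _) _; rewrite normrM normr_sg.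
  by case: (_ != 0); rewrite ?mul1r ?mul0r.
have step1 : E <= G + int11 (fun x => Num.sg (e x) * qq.[x]).
  have eq1 : E = int11 (fun x => Num.sg (e x) * g x) + int11 (fun x => Num.sg (e x) * qq.[x]).
    rewrite /int11 -(RintegralD _ (integ_sgM ce cg) (integ_sgM ce (cpol qq))) //.
    rewrite /E /L1norm /int11; apply: eq_Rintegral => x _ /=.
    rewrite normrEsg -mulrDr; congr (_ * _).
    by rewrite /e /g /qq hornerD hornerN hs; ring.
  rewrite eq1 lerD2r /G /L1norm /int11.
  apply: le_Rintegral => //; first exact: integ_sgM.
  exact: cint (withinN cg).
have step4 : int11 (fun x => Num.sg (e x) * qq.[x]) = \sum_(j < n.+1) d j * Lmu f c j.
  rewrite /int11; transitivity (\int[@lebesgue_measure R]_(x in `[(-1 : R), 1]) (\sum_(j < n.+1) Num.sg (e x) * (d j * (chebU R j).[x]))).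
    apply: eq_Rintegral => x _; rewrite hd horner_sum mulr_sumr; apply: eq_bigr => j _.
    by rewrite hornerZ.
  rewrite (proj2 (@Rintegral_sum R (-1) 1 n.+1 (fun j x => Num.sg (e x) * (d j * (chebU R j).[x])) _)); last first.
    move=> j; apply: integ_sgM => //.
    have -> : (fun x => d j * (chebU R j).[x]) = (fun x => (d j *: chebU R j).[x]).
      by apply/funext => x; rewrite hornerZ.
    exact: cpol.
  apply: eq_bigr => j _; rewrite /Lmu /int11.
  rewrite -(RintegralZl _ _ (integ_sgM ce (cpol (chebU R j)))) //.
  by apply: eq_Rintegral => x _; rewrite mulrCA.
have step5 : \sum_(j < n.+1) d j * Lmu f c j <= n.+1%:R * (2 / pi * Q) * m.
  apply: (@le_trans _ _ (\sum_(j < n.+1) (2 / pi * Q) * m)).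
    apply: ler_sum => j _; apply: le_trans (ler_norm _) _.
    rewrite normrM; apply: ler_pM => //.
      have := coef_bound d j; rewrite -hd; exact.
    exact: (le_bigmax 0 (fun i => `|Lmu f c i|) j).
  rewrite sumr_const card_ord (_ : (2 / pi * Q) * m *+ n.+1 = n.+1%:R * (2 / pi * Q) * m) //; ring.
have step6 : Q <= E + G.
  rewrite /Q /E /G /L1norm /int11 -(RintegralD _ (cint (withinN ce)) (cint (withinN cg))) //.
  apply: le_Rintegral => //.
  - exact: cint (withinN (cpol qq)).
  - exact: cint (withinD (withinN ce) (withinN cg)).
  move=> x _ /=; have -> : qq.[x] = e x - g x.
    by rewrite /e /g /qq hornerD hornerN hs; ring.
  by apply: le_trans (ler_normD _ _) _; rewrite normrN.
have step7 : G <= E.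
  have -> : E = L1norm (fun x => f x - sp.[x]).
    by rewrite /E; congr L1norm; apply/funext => x; rewrite /e hs.
  exact: hp.2 sp sps.
have hK : n.+1%:R * (2 / pi * Q) * m <= M * E.
  have Q2 : Q <= 2 * E by lra.
  have h2pi : 0 <= 2 / pi :> R by rewrite divr_ge0 // ltW.
  apply: (@le_trans _ _ (n.+1%:R * (2 / pi * (2 * E)) * m)).
    by rewrite ler_wpM2r // ler_wpM2l // ler_wpM2l.
  rewrite (_ : n.+1%:R * (2 / pi * (2 * E)) * m = (2 / pi * m * E) * (2 * n.+1)%N%:R); last first.
    by rewrite natrM; ring.
  rewrite (_ : M * E = (2 / pi * m * E) * (n.+2 ^ 2)%N%:R); last first.
    by rewrite /M -/m natrX; ring.
  apply: ler_wpM2l; first by apply: mulr_ge0 => //; apply: mulr_ge0.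
  rewrite ler_nat.
  by rewrite expnS expn1 !mulSn !mulnS; lia.
have hE : E <= G + M * E.
  apply: (le_trans step1); rewrite lerD2l step4.
  exact: (le_trans step5 hK).
have h1M : 0 < 1 - M by rewrite subr_gt0.
rewrite -(@ler_pM2l _ (1 - M)) // mulrA mulfV ?gt_eqF // mul1r.
by rewrite mulrBl mul1r lerBlDr addrC -addrC.
Qed.
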